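(* Let $G=SL(n,\mathbb{R})$, $u\in\mathcal{S}_n$, $x\in Y_{\ge u}$, $A=u^{-1}[xu^{-1}]_+u$, and $\nu=\mathrm{diag}(n,n-1,\dots,1)$. Then $\mathrm{str}(A^{-1}\nu A)\ge0$.
   Context: $B_-,H,N,N_-$ denote the lower-triangular, diagonal, unipotent upper triangular and unipotent lower triangular matrices. Elements of $W=\mathcal{S}_n$ are bijections of $\{1,\dots,n\}$, represented by permutation matrices $u$ with $ue_b=e_{u(b)}$ (computations in $GL(n,\mathbb{R})$). For a matrix $z$ admitting a Gaussian (LDU) decomposition $z=[z]_-[z]_0[z]_+$, $[z]_+$ is its unipotent upper triangular factor. $Y$ is the set of unipotent upper triangular real matrices all of whose minors are nonnegative; $Y^\circ_w=Y\cap B_-wB_-$, and $Y_{\ge u}=\bigcup_{w\ge u}Y^\circ_w$ with respect to the Bruhat order ($u\le w$ iff $B_-uB_-\subset\overline{B_-wB_-}$); for $x\in Y_{\ge u}$, $xu^{-1}$ has a Gaussian decomposition. For any $n\times n$ matrix $z$, $\mathrm{str}(z)=\sum_{i=1}^{n-1}z_{i,i+1}$. *)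

(* Defs.v *)
From HB Require Import structures.
From mathcomp Require Import all_boot all_order all_algebra all_fingroup.
From mathcomp Require Import reals.
Set Implicit Arguments. Unset Strict Implicit. Unset Printing Implicit Defensive.
Import Order.TTheory GRing.Theory Num.Theory.
Local Open Scope ring_scope.

Section Defs.
Variable R : realType.
Variable n : nat.

Definition pmat (u : 'S_n) : 'M[R]_n := \matrix_(i, j) (i == u j)%:R.

Definition is_lower (z : 'M[R]_n) : Prop := forall i j : 'I_n, (i < j)%N -> z i j = 0.
Definition is_upper (z : 'M[R]_n) : Prop := forall i j : 'I_n, (j < i)%N -> z i j = 0.
Definition is_diag (z : 'M[R]_n) : Prop := forall i j : 'I_n, i != j -> z i j = 0.
Definition unipotent_upper (z : 'M[R]_n) : Prop := is_upper z /\ forall i, z i i = 1.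
Definition unipotent_lower (z : 'M[R]_n) : Prop := is_lower z /\ forall i, z i i = 1.

Definition in_Bminus (b : 'M[R]_n) : Prop := is_lower b /\ b \in unitmx.

Definition bruhat_cell (w : 'S_n) (z : 'M[R]_n) : Prop :=
  exists b1 b2, in_Bminus b1 /\ in_Bminus b2 /\ z = b1 *m pmat w *m b2.

Definition in_closure (S : 'M[R]_n -> Prop) (z : 'M[R]_n) : Prop :=
  forall e : R, 0 < e -> exists y, S y /\ forall i j, `|z i j - y i j| < e.

Definition bruhat_le (u w : 'S_n) : Prop :=
  forall z, bruhat_cell u z -> in_closure (bruhat_cell w) z.

Definition strict_incr k (f : 'I_k -> 'I_n) : Prop :=
  forall a b : 'I_k, (a < b)%N -> (f a < f b)%N.

Definition totally_nonneg (z : 'M[R]_n) : Prop :=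
  forall k (f g : 'I_k -> 'I_n), strict_incr f -> strict_incr g ->
    0 <= \det (\matrix_(a, b) z (f a) (g b)).

Definition inY (x : 'M[R]_n) : Prop := unipotent_upper x /\ totally_nonneg x.

Definition inY_ge (u : 'S_n) (x : 'M[R]_n) : Prop :=
  exists w, bruhat_le u w /\ inY x /\ bruhat_cell w x.

(* Gaussian decomposition z = L D U; U is [z]_+ *)
Definition gauss_LDU (z L D U : 'M[R]_n) : Prop :=
  unipotent_lower L /\ is_diag D /\ unipotent_upper U /\ z = L *m D *m U.

Definition str (z : 'M[R]_n) : R :=
  \sum_(i : 'I_n) \sum_(j : 'I_n | val j == (val i).+1) z i j.

Definition nu : 'M[R]_n := diag_mx (\row_(i < n) (n - val i)%:R).

End Defs.

(* Main.v *)
Require Import Defs.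
From HB Require Import structures.
From mathcomp Require Import all_boot all_order all_algebra all_fingroup.
From mathcomp Require Import reals.
From mathcomp Require Import zify ring lra.
Set Implicit Arguments. Unset Strict Implicit. Unset Printing Implicit Defensive.
Import Order.TTheory GRing.Theory Num.Theory.
Local Open Scope ring_scope.

Section Gen.
Variable n : nat.

Lemma incr_inj k (g : 'I_k -> 'I_n) : strict_incr g -> injective g.
Proof.
move=> hg a b eab; case: (ltngtP a b) => [ab|ba|/val_inj //].
- by have := hg _ _ ab; rewrite eab ltnn.
- by have := hg _ _ ba; rewrite eab ltnn.
Qed.

Lemma lift_incr k (q : 'I_k.+1) : forall a b : 'I_k, (a < b)%N -> (lift q a < lift q b)%N.
Proof.
move=> a b ab; rewrite /= /bump.
case: (leqP q a) => qa; case: (leqP q b) => qb /=; rewrite ?add1n ?add0n; try lia.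
Qed.

Lemma strict_incr_lift k (g : 'I_k.+1 -> 'I_n) (q : 'I_k.+1) :
  strict_incr g -> strict_incr (fun b => g (lift q b)).
Proof. by move=> hg a b ab; apply: hg; apply: lift_incr. Qed.

Lemma strict_incr_widen k (hk : (k <= n)%N) : strict_incr (widen_ord hk).
Proof. by move=> a b. Qed.

Lemma card_lt k m (hm : (m <= k)%N) : #|[set q : 'I_k | (q < m)%N]| = m.
Proof.
have -> : [set q : 'I_k | (q < m)%N] = widen_ord hm @: [set: 'I_m].
  apply/setP => q; rewrite inE; apply/idP/imsetP.
  - by move=> qm; exists (Ordinal qm) => //; apply: val_inj.
  - by case=> q' _ ->; rewrite /= ltn_ord.
rewrite card_imset ?cardsT ?card_ord //; by move=> a b /(congr1 val) /= /val_inj.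
Qed.

Lemma pos_incr k (g : 'I_k -> 'I_n) (S : {set 'I_n}) :
  strict_incr g -> (forall q, g q \in S) -> (forall y, y \in S -> exists q, g q = y) ->
  forall q, #|[set y in S | (y < g q)%N]| = q.
Proof.
move=> hg gS gsurj q.
have -> : [set y in S | (y < g q)%N] = g @: [set q' : 'I_k | (q' < q)%N].
  apply/setP => y; rewrite !inE; apply/idP/imsetP.
  - case/andP => yS ylt; case: (gsurj y yS) => q' eq'; exists q'; last by [].
    rewrite inE; case: (ltngtP q' q) => [//|qq|qq].
    + by have := hg _ _ qq; rewrite eq' ltnNge ltnW.
    + by move: ylt; rewrite -eq' (val_inj qq) ltnn.
  - by case=> q'; rewrite inE => qq ->; rewrite gS /=; apply: hg.
by rewrite card_imset ?card_lt //; [apply: ltnW | apply: incr_inj].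
Qed.

Lemma sum_image (R : nmodType) k (g : 'I_k -> 'I_n) (F : 'I_n -> R) : injective g ->
  (forall j, (forall q, g q != j) -> F j = 0) -> \sum_j F j = \sum_q F (g q).
Proof.
move=> ig hF.
rewrite (bigID (mem (g @: [set: 'I_k]))) /= [X in _ + X]big1 ?addr0.
  by rewrite big_imset /=; [apply: eq_bigl => q; rewrite inE | move=> a b _ _; apply: ig].
move=> j jn; apply: hF => q; apply/eqP => eq; move: jn; rewrite -eq.
by rewrite imset_f ?inE.
Qed.

Lemma enum_sorted_ord (S : {set 'I_n}) : sorted (relpre val ltn) (enum S).
Proof.
have h : sorted (relpre val ltn) (enum 'I_n).
  by rewrite -sorted_map val_enum_ord iota_ltn_sorted.
rewrite /enum_mem -enumT; apply: sorted_filter => //.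
by move=> a b c /=; apply: ltn_trans.
Qed.

Lemma incr_enum (S : {set 'I_n}) k (hk : #|S| = k) (y0 : 'I_n) :
  exists g : 'I_k -> 'I_n, (forall a b : 'I_k, (a < b)%N -> (g a < g b)%N) /\
     (forall q, g q \in S) /\ (forall y, y \in S -> exists q, g q = y).
Proof.
pose s := enum S.
have hs : size s = k by rewrite -hk cardE.
exists (fun q : 'I_k => nth y0 s q); split; [|split].
- move=> a b ab.
  have := @sorted_ltn_nth _ (relpre val ltn) (fun a b c => @ltn_trans _ _ _) y0 s (enum_sorted_ord S).
  by move/(_ a b); rewrite !inE hs !ltn_ord => /(_ isT isT ab).
- by move=> q; rewrite -mem_enum mem_nth // hs.
- move=> y yS; have yin : y \in s by rewrite mem_enum.
  have hi : (index y s < k)%N by rewrite -hs index_mem.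
  by exists (Ordinal hi); rewrite /= nth_index.
Qed.

End Gen.

Section Core.
Variable R : realType.
Variable n : nat.

Lemma det_up_unip (z : 'M[R]_n) : unipotent_upper z -> \det z = 1.
Proof.
case=> hup hd; rewrite -det_tr det_trig.
  by rewrite big1 // => i _; rewrite mxE hd.
by apply/is_trig_mxP => i j ij; rewrite mxE hup.
Qed.

Lemma det_low_unip (z : 'M[R]_n) : unipotent_lower z -> \det z = 1.
Proof.
case=> hlo hd; rewrite det_trig.
  by rewrite big1 // => i _; rewrite hd.
by apply/is_trig_mxP => i j ij; rewrite hlo.
Qed.

Lemma pmat_mulV (u : 'S_n) : pmat R u *m pmat R u^-1 = 1%:M.
Proof.
apply/matrixP => i j; rewrite !mxE (bigD1 ((u^-1)%g j)) //= big1 ?addr0.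
  by rewrite !mxE permKV eqxx mulr1.
by move=> k kn; rewrite !mxE (negbTE kn) mulr0.
Qed.

Lemma pmat_unit (u : 'S_n) : pmat R u \in unitmx.
Proof. by case: (mulmx1_unit (pmat_mulV u)). Qed.

Lemma pmat_inv (u : 'S_n) : invmx (pmat R u) = pmat R u^-1.
Proof.
by rewrite -[LHS]mulmx1 -(pmat_mulV u) mulmxA mulVmx ?mul1mx // pmat_unit.
Qed.

Lemma inv_right (A B : 'M[R]_n) : A *m B = 1%:M -> invmx A = B.
Proof.
move=> AB; case: (mulmx1_unit AB) => Au _.
by rewrite -[LHS]mulmx1 -AB mulmxA mulVmx ?mul1mx.
Qed.

Lemma upper_inv (V X : 'M[R]_n) : is_upper V -> (forall r, V r r != 0) ->
  V *m X = 1%:M -> forall r c : 'I_n, (c < r)%N -> X r c = 0.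
Proof.
move=> Vup Vd VX.
suff H : forall m, forall r c : 'I_n, (n - r <= m)%N -> (c < r)%N -> X r c = 0.
  by move=> r c; apply: (H (n - r)%N).
elim=> [|m IH] r c hm cr.
  by have := ltn_ord r; lia.
have := congr1 (fun M : 'M[R]_n => M r c) VX; rewrite !mxE.
rewrite (bigD1 r) //= big1 ?addr0.
  have -> : (r == c) = false by apply/negbTE; rewrite neq_ltn cr orbT.
  move=> /eqP; rewrite mulf_eq0 (negbTE (Vd r)) /=.
  by move/eqP.
move=> k kr; case: (ltngtP k r) => [kr'|rk|/val_inj ek]; last by rewrite ek eqxx in kr.
  by rewrite Vup ?mul0r.
by rewrite (IH k c) ?mulr0 //; lia.
Qed.


Section Main.
Variables (u : 'S_n) (x L D U : 'M[R]_n).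
Hypothesis hxu : unipotent_upper x.
Hypothesis hxt : totally_nonneg x.
Hypothesis hLDU : gauss_LDU (x *m invmx (pmat R u)) L D U.

Let P := pmat R u.

Lemma x_unit : x \in unitmx.
Proof. by rewrite unitmxE det_up_unip // unitr1. Qed.

Lemma L_unit : L \in unitmx.
Proof. by case: hLDU => hL _; rewrite unitmxE det_low_unip // unitr1. Qed.

Lemma D_unit : D \in unitmx.
Proof.
case: hLDU => hL [hD [hU e]].
have := congr1 determinant e; rewrite !det_mulmx (det_low_unip hL) (det_up_unip hxu).
rewrite (det_up_unip hU) !mul1r mulr1 unitmxE => <-.
by rewrite -unitmxE unitmx_inv pmat_unit.
Qed.

Lemma Dd_neq0 r : D r r != 0.
Proof.
case: hLDU => hL [hD [hU e]].
apply/negP => /eqP h0.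
have := D_unit; rewrite unitmxE det_trig; last first.
  by apply/is_trig_mxP => i j ij; apply: hD; rewrite neq_ltn ij.
by rewrite (bigD1 r) //= h0 mul0r unitr0.
Qed.

Definition Z := invmx L *m x.
Definition W := invmx x *m L.

Lemma ZW : Z *m W = 1%:M.
Proof.
rewrite /Z /W !mulmxA -[invmx L *m x *m invmx x]mulmxA mulmxV ?x_unit //.
by rewrite mulmx1 mulVmx ?L_unit.
Qed.

Lemma WZ : W *m Z = 1%:M.
Proof.
rewrite /Z /W !mulmxA -[invmx x *m L *m invmx L]mulmxA mulmxV ?L_unit //.
by rewrite mulmx1 mulVmx ?x_unit.
Qed.

Lemma ZE : Z = D *m U *m P.
Proof.
case: hLDU => hL [hD [hU e]].
have ex : x = L *m D *m U *m P by rewrite -e mulmxKV // pmat_unit.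
by rewrite /Z ex -!mulmxA mulKmx ?L_unit.
Qed.

Lemma Zentry c j : Z c j = D c c * U c (u j).
Proof.
case: hLDU => hL [hD [hU e]].
rewrite ZE mxE (bigD1 (u j)) //= big1 ?addr0.
  rewrite /P /pmat !mxE eqxx mulr1 (bigD1 c) //= big1 ?addr0 //.
  by move=> k kc; rewrite hD ?mul0r // eq_sym.
by move=> k kn; rewrite /P /pmat [X in _ * X]mxE (negbTE kn) mulr0.
Qed.

Lemma Z0 (c j : 'I_n) : (u j < c)%N -> Z c j = 0.
Proof.
case: hLDU => hL [hD [hU e]] => h.
by rewrite Zentry hU.1 ?mulr0.
Qed.

Lemma W0 (j c : 'I_n) : (c < u j)%N -> W j c = 0.
Proof.
case: hLDU => hL [hD [hU e]] => h.
pose V := D *m U.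
have Ve r c' : V r c' = D r r * U r c'.
  rewrite mxE (bigD1 r) //= big1 ?addr0 // => k kr.
  by rewrite hD ?mul0r // eq_sym.
have Vup : is_upper V by move=> r c' cr; rewrite Ve hU.1 ?mulr0.
have Vd : forall r, V r r != 0 by move=> r; rewrite Ve hU.2 mulr1 Dd_neq0.
have VX : V *m (P *m W) = 1%:M by rewrite mulmxA -ZE ZW.
have := upper_inv Vup Vd VX h; rewrite mxE (bigD1 j) //= big1 ?addr0.
  by rewrite /P /pmat mxE eqxx mul1r.
by move=> k kj; rewrite /P /pmat mxE (inj_eq perm_inj) eq_sym (negbTE kj) mul0r.
Qed.

Lemma xLZ : x = L *m Z.
Proof. by rewrite /Z mulmxA mulmxV ?L_unit // mul1mx. Qed.

Lemma xWL : x *m W = L.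
Proof. by rewrite /W mulmxA mulmxV ?x_unit // mul1mx. Qed.


Definition sqm (M : 'M[R]_n) k (hk : (k <= n)%N) (f : 'I_k -> 'I_n) : 'M[R]_k :=
  \matrix_(a, b) M (widen_ord hk a) (f b).

Lemma sum_widen k (hk : (k <= n)%N) (F : 'I_n -> R) :
  (forall j : 'I_n, (k <= j)%N -> F j = 0) -> \sum_j F j = \sum_(r < k) F (widen_ord hk r).
Proof.
move=> hF; apply: sum_image; first by move=> a b /(congr1 val) /= /val_inj.
move=> j hj; apply: hF; rewrite leqNgt; apply/negP => jk.
by have := hj (Ordinal jk); rewrite (_ : widen_ord _ _ = j) ?eqxx //; apply: val_inj.
Qed.

Lemma det_sqm_L k (hk : (k <= n)%N) : \det (sqm L hk (widen_ord hk)) = 1.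
Proof.
case: hLDU => [[hL hLd] _].
rewrite det_trig; first by rewrite big1 // => i _; rewrite mxE hLd.
by apply/is_trig_mxP => i j ij; rewrite mxE hL.
Qed.

Lemma det_sqm_LZ k (hk : (k <= n)%N) f : \det (sqm x hk f) = \det (sqm Z hk f).
Proof.
case: hLDU => [[hL hLd] _].
have -> : sqm x hk f = sqm L hk (widen_ord hk) *m sqm Z hk f.
  apply/matrixP => a b; rewrite !mxE {1}xLZ mxE (sum_widen hk).
    by apply: eq_bigr => r _; rewrite !mxE.
  by move=> j kj; rewrite hL ?mul0r //= (leq_trans (ltn_ord a) kj).
by rewrite det_mulmx det_sqm_L mul1r.
Qed.

Lemma xsub_nz k (hk : (k <= n)%N) f : injective f ->
  (forall j : 'I_n, (u j < k)%N -> exists q, f q = j) -> \det (sqm x hk f) != 0.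
Proof.
move=> fi fs.
pose Ws : 'M[R]_k := \matrix_(q, c) W (f q) (widen_ord hk c).
have e : sqm x hk f *m Ws = sqm L hk (widen_ord hk).
  apply/matrixP => a c; rewrite !mxE -xWL mxE (sum_image (g := f)) //.
    by apply: eq_bigr => q _; rewrite !mxE.
  move=> j hj; rewrite W0 ?mulr0 //= ltnNge; apply/negP => jc.
  have [q fq] : exists q, f q = j by apply: fs; apply: (leq_ltn_trans jc).
  by have := hj q; rewrite fq eqxx.
have := congr1 determinant e; rewrite det_mulmx det_sqm_L => h.
by apply/negP => /eqP h0; move: h; rewrite h0 mul0r; apply/eqP; rewrite eq_sym oner_eq0.
Qed.


Lemma row_col_sqm (M : 'M[R]_n) (c : nat) (hk : (c.+1 <= n)%N) (hk' : (c <= n)%N)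
  (g : 'I_c.+1 -> 'I_n) (q : 'I_c.+1) :
  row' ord_max (col' q (sqm M hk g)) = sqm M hk' (fun b => g (lift q b)).
Proof.
apply/matrixP => a b; rewrite !mxE; congr (M _ _); apply: val_inj => /=.
by rewrite /bump leqNgt ltn_ord add0n.
Qed.

Lemma E1 (c : 'I_n) (hk : (c.+1 <= n)%N) (hk' : (c <= n)%N) (g : 'I_c.+1 -> 'I_n) :
  injective g -> (forall j, (forall q, g q != j) -> (c < u j)%N) ->
  forall q, \det (sqm x hk g) * W (g q) c =
            (-1) ^+ (c + q) * \det (sqm x hk' (fun b => g (lift q b))).
Proof.
case: hLDU => [[hL hLd] _] gi gs q.
set M := sqm x hk g.
pose w : 'cV[R]_(c.+1) := \col_q W (g q) c.
have Mw : M *m w = delta_mx ord_max 0.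
  apply/matrixP => a b; rewrite ord1 !mxE.
  rewrite (eq_bigr (fun q => x (widen_ord hk a) (g q) * W (g q) c)); last first.
    by move=> q' _; rewrite !mxE.
  rewrite -(sum_image (F := fun j => x (widen_ord hk a) j * W j c)) //; last first.
    by move=> j hj; rewrite W0 ?mulr0 //; apply: gs.
  rewrite (_ : \sum_j _ = (x *m W) (widen_ord hk a) c); last by rewrite mxE.
  rewrite xWL andbT.
  case: (eqVneq a ord_max) => [->|an].
    by rewrite (_ : widen_ord _ _ = c) ?hLd //; apply: val_inj.
  apply: hL => /=; have := ltn_ord a; rewrite ltnS leq_eqVlt => /orP [|//].
  by move=> /eqP ea; move: an; rewrite (_ : a = ord_max) ?eqxx //; apply: val_inj.
have := congr1 (mulmx (\adj M)) Mw; rewrite mulmxA mul_adj_mx mul_scalar_mx => h.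
have := congr1 (fun N : 'M[R]_(c.+1, 1) => N q 0) h; rewrite !mxE => ->.
rewrite (bigD1 ord_max) //= big1 ?addr0; last first.
  by move=> b bn; rewrite !mxE (negbTE bn) mulr0.
rewrite !mxE !eqxx mulr1 /cofactor row_col_sqm.
by [].
Qed.


Lemma E2 (c : 'I_n) (hk : (c.+1 <= n)%N) (hk' : (c <= n)%N) (g : 'I_c.+1 -> 'I_n)
  (q0 : 'I_c.+1) : (forall q, q != q0 -> (u (g q) < c)%N) ->
  \det (sqm x hk g) = (-1) ^+ (c + q0) * Z c (g q0) *
                      \det (sqm x hk' (fun b => g (lift q0 b))).
Proof.
move=> hg.
have wc : widen_ord hk ord_max = c by apply: val_inj.
rewrite det_sqm_LZ (expand_det_row _ ord_max) (bigD1 q0) //= big1 ?addr0; last first.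
  by move=> q qn; rewrite mxE wc Z0 ?mul0r // hg.
rewrite /cofactor row_col_sqm -det_sqm_LZ mxE wc /=.
by rewrite mulrA [Z c _ * _]mulrC.
Qed.


Lemma card_predlt (c : nat) (hc : (c <= n)%N) : #|[set y : 'I_n | (u y < c)%N]| = c.
Proof.
have -> : [set y : 'I_n | (u y < c)%N] = u @^-1: [set z : 'I_n | (z < c)%N].
  by apply/setP => y; rewrite !inE.
by rewrite card_preimset ?card_lt //; apply: perm_inj.
Qed.

Lemma term_sign (i j1 c : 'I_n) : (j1 : nat) = i.+1 -> (u i < c)%N -> (c <= u j1)%N ->
  0 <= ((i : nat)%:R - (((u^-1)%g c : 'I_n) : nat)%:R) * (W i c * Z c j1).
Proof.
move=> ej1 uic cuj.
have hk : (c.+1 <= n)%N := ltn_ord c.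
have hk' : (c <= n)%N := ltnW hk.
set p := (u^-1)%g c.
have up : u p = c by rewrite /p permKV.
have eqp : forall y, (u y == c) = (y == p).
  by move=> y; rewrite -up (inj_eq perm_inj).
pose K := [set y : 'I_n | (u y < c)%N].
have cK : #|K| = c by apply: card_predlt.
pose S3 := [set y : 'I_n | (u y < c.+1)%N].
have c3 : #|S3| = c.+1 by apply: card_predlt.
pose S2 := j1 |: K.
have j1K : j1 \notin K by rewrite inE -leqNgt.
have c2 : #|S2| = c.+1 by rewrite cardsU1 j1K cK.
have [g3 [i3 [in3 su3]]] := incr_enum c3 c.
have [g2 [i2 [in2 su2]]] := incr_enum c2 c.
have gi3 := incr_inj i3; have gi2 := incr_inj i2.
have [q1 e1] : exists q, g3 q = i by apply: su3; rewrite inE ltnS ltnW.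
have [q0 e0] : exists q, g2 q = j1 by apply: su2; rewrite !inE eqxx.
have E1' := E1 hk hk' gi3.
have E1i : \det (sqm x hk g3) * W i c =
    (-1) ^+ (c + q1) * \det (sqm x hk' (fun b => g3 (lift q1 b))).
  rewrite -e1; apply: E1'; move=> j hj; rewrite ltnNge; apply/negP => ujc.
  have [q eq] : exists q, g3 q = j by apply: su3; rewrite inE ltnS.
  by have := hj q; rewrite eq eqxx.
have E2i : \det (sqm x hk g2) = (-1) ^+ (c + q0) * Z c j1 *
    \det (sqm x hk' (fun b => g2 (lift q0 b))).
  rewrite -e0; apply: E2 => q qn.
  have := in2 q; rewrite !inE => /orP [/eqP eq|//].
  by move: qn; rewrite -(inj_eq gi2) eq e0 eqxx.
have tnn : forall k (hk0 : (k <= n)%N) (f : 'I_k -> 'I_n), strict_incr f ->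
    0 <= \det (sqm x hk0 f).
  by move=> k hk0 f hf; apply: hxt => //; apply: strict_incr_widen.
have d3p : 0 < \det (sqm x hk g3).
  rewrite lt0r tnn // andbT; apply: xsub_nz => // j hj.
  by apply: su3; rewrite inE.
have m1p : 0 <= \det (sqm x hk' (fun b => g3 (lift q1 b))).
  by apply: tnn; apply: strict_incr_lift.
have d2p : 0 <= \det (sqm x hk g2) by apply: tnn.
have m2p : 0 < \det (sqm x hk' (fun b => g2 (lift q0 b))).
  rewrite lt0r tnn ?andbT; last by apply: strict_incr_lift.
  apply: xsub_nz; first by move=> a b /gi2 /lift_inj.
  move=> j hj; have [q eq] : exists q, g2 q = j by apply: su2; rewrite !inE hj orbT.
  case: (unliftP q0 q) => [q' eq'|eq']; first by exists q'; rewrite -eq' eq.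
  by move: hj; rewrite -eq eq' e0 ltnNge cuj.
pose A := [set y in K | (y < i)%N].
have pos0 : (q0 : nat) = #|A|.+1.
  have := pos_incr i2 in2 su2 q0; rewrite e0 => <-.
  rewrite [LHS](cardsD1 i) /A /S2 /K !inE uic ej1 ltnSn orbT /= add1n; congr (_.+1).
  apply: eq_card => y; rewrite !inE.
  case: (ltngtP y i) => h.
  - have -> : (y == j1) = false.
      apply/negbTE/eqP => e; suff : (y : nat) = j1 by lia. by rewrite e.
    have -> : (y == i) = false.
      apply/negbTE/eqP => e; suff : (y : nat) = i by lia. by rewrite e.
    have -> : (y < i.+1)%N by lia.
    by rewrite /= !andbT.
  - have -> : (y < i.+1)%N = false by lia.
    by rewrite !andbF.
  - by rewrite (val_inj h) eqxx andbF.
have pos1 : (q1 : nat) = (#|A| + (p < i))%N.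
  have := pos_incr i3 in3 su3 q1; rewrite e1 => <-.
  rewrite [LHS](cardsD1 p) /A /S3 /K !inE up ltnSn /= addnC; congr (_ + _)%N.
  apply: eq_card => y; rewrite !inE ltnS [(u y <= c)%N]leq_eqVlt val_eqE eqp.
  by case: (eqVneq y p) => [->|yp] /=; rewrite ?up ?ltnn.
have hs : (-1) ^+ (c + q1) = (-1) ^+ (~~ (p < i)%N) * (-1) ^+ (c + q0) :> R.
  rewrite -[LHS]signr_odd -[X in _ * X]signr_odd -signr_addb; congr (_ ^+ _).
  rewrite pos0 pos1 !oddD /=.
  by case: (p < i)%N; case: (odd c); case: (odd #|A|).
set T := W i c * Z c j1.
have key : \det (sqm x hk g3) * \det (sqm x hk' (fun b => g2 (lift q0 b))) * T =
    (-1) ^+ (~~ (p < i)%N) * (\det (sqm x hk' (fun b => g3 (lift q1 b))) *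
       \det (sqm x hk g2)).
  rewrite E2i /T.
  have -> : forall a b w z : R, a * b * (w * z) = (a * w) * z * b by move=> *; ring.
  rewrite E1i hs; ring.
have pos : 0 < \det (sqm x hk g3) * \det (sqm x hk' (fun b => g2 (lift q0 b))).
  by apply: mulr_gt0.
have pi : p != i by apply/eqP => e; move: uic; rewrite -e up ltnn.
case hb : (p < i)%N; move: key; rewrite hb => key.
- move: key; rewrite (_ : (-1) ^+ (~~ true) = 1 :> R); last by rewrite expr0.
  rewrite mul1r => key.
  apply: mulr_ge0; first by rewrite subr_ge0 ler_nat ltnW.
  by rewrite -(pmulr_rge0 _ pos) key; apply: mulr_ge0.
- apply: mulr_le0.
    by rewrite subr_le0 ler_nat leqNgt hb.
  move: key; rewrite (_ : (-1) ^+ (~~ false) = -1 :> R); last by rewrite expr1.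
  rewrite mulN1r => key.
  rewrite -(pmulr_rle0 _ pos) key oppr_le0; apply: mulr_ge0 => //.
Qed.


Definition Nmx := P *m nu R n *m invmx P.

Lemma NmxE c c' : Nmx c c' = (n - (u^-1)%g c)%:R *+ (c == c').
Proof.
rewrite /Nmx pmat_inv mxE (bigD1 ((u^-1)%g c')) //= big1 ?addr0; last first.
  by move=> l ln; rewrite [X in _ * X]mxE (negbTE ln) mulr0.
rewrite [X in _ * X]mxE eqxx mulr1 mxE (bigD1 ((u^-1)%g c)) //= big1 ?addr0; last first.
  move=> k kn; rewrite /P /pmat mxE; have -> : (c == u k) = false by apply/negbTE; apply: contra kn => /eqP ->; rewrite permK.
  by rewrite mul0r.
rewrite /P /pmat mxE permKV eqxx mul1r /nu mxE mxE.
by rewrite (inj_eq perm_inj).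
Qed.

Lemma DN : D *m Nmx = Nmx *m D.
Proof.
case: hLDU => hL [hD [hU e]].
apply/matrixP => c c'; rewrite !mxE (bigD1 c) //= big1 ?addr0; last first.
  by move=> k kc; rewrite hD ?mul0r // eq_sym.
rewrite (bigD1 c') //= big1 ?addr0; last by move=> k kc; rewrite hD ?mulr0.
rewrite !NmxE; case: (eqVneq c c') => [->|cc]; first by rewrite mulrC.
by rewrite !mulr0n mulr0 mul0r.
Qed.

Lemma A_eq : invmx P *m U *m P = invmx P *m invmx D *m Z.
Proof.
by rewrite ZE -!mulmxA mulKmx ?D_unit.
Qed.

Lemma conj_eq :
  invmx (invmx P *m U *m P) *m nu R n *m (invmx P *m U *m P) = W *m Nmx *m Z.
Proof.
set A := invmx P *m U *m P.
have iA : invmx A = W *m D *m P.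
  apply: inv_right; rewrite /A A_eq.
  rewrite -!mulmxA (mulmxA x) mulmxV ?x_unit // mul1mx (mulmxA (invmx L)) mulVmx ?L_unit //.
  rewrite mul1mx (mulmxA (invmx D)) mulVmx ?D_unit //.
  by rewrite mul1mx mulVmx ?pmat_unit.
rewrite iA /A A_eq.
have -> : W *m D *m P *m nu R n *m (invmx P *m invmx D *m Z) =
          W *m (D *m Nmx) *m invmx D *m Z.
  by rewrite /Nmx !mulmxA.
by rewrite DN (mulmxA W) -(mulmxA (W *m Nmx)) mulmxV ?D_unit // mulmx1.
Qed.


Lemma final_main : let A := invmx P *m U *m P in
  0 <= str (invmx A *m nu R n *m A).
Proof.
rewrite /= conj_eq /str.
apply: sumr_ge0 => i _; apply: sumr_ge0 => j /eqP ej.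
have entry : (W *m Nmx *m Z) i j =
    \sum_c (n - ((u^-1)%g c : nat))%:R * (W i c * Z c j).
  rewrite mxE; apply: eq_bigr => c _; rewrite mxE (bigD1 c) //= big1 ?addr0.
    by rewrite NmxE eqxx mulr1n mulrAC mulrC.
  by move=> k kc; rewrite NmxE (negbTE kc) mulr0n mulr0 ?mul0r.
have sumT : \sum_c W i c * Z c j = 0.
  have := congr1 (fun M : 'M[R]_n => M i j) WZ; rewrite !mxE => ->.
  have -> : (i == j) = false.
    by apply/negbTE/eqP => e; move: ej; rewrite -e; lia.
  by [].
rewrite entry.
have -> : \sum_c (n - ((u^-1)%g c : nat))%:R * (W i c * Z c j) =
    \sum_c ((i : nat)%:R - (((u^-1)%g c : 'I_n) : nat)%:R) * (W i c * Z c j) +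
    (n - i)%:R * \sum_c (W i c * Z c j).
  rewrite mulr_sumr -big_split; apply: eq_bigr => c _ /=; rewrite -mulrDl; congr (_ * _).
  rewrite !natrB ?(ltnW (ltn_ord _)) //; ring.
rewrite sumT mulr0 addr0; apply: sumr_ge0 => c _.
case: (ltngtP c (u i)) => h.
- by rewrite W0 // mul0r mulr0.
- case: (leqP c (u j)) => h2.
  + by apply: term_sign.
  + by rewrite (Z0 h2) !mulr0.
- have -> : c = u i by apply: val_inj.
  by rewrite permK subrr mul0r.
Qed.

End Main.
End Core.

Unset Implicit Arguments.

Theorem lemma6p7 (R : realType) (n : nat) (u : 'S_n) (x : 'M[R]_n)
  (hx : inY_ge u x) (L D U : 'M[R]_n)
  (hLDU : gauss_LDU (x *m invmx (pmat R u)) L D U) :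
  let A := invmx (pmat R u) *m U *m pmat R u in
  0 <= str (invmx A *m nu R n *m A).
Proof.
case: hx => w [_ [[hxu hxt] _]].
exact: (final_main hxu hxt hLDU).
Qed.
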